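(* Let $K(x,y)=\dfrac{\log\frac{|x-y|}{\langle x\rangle}}{1+\log\langle y\rangle}$ for $x,y\in\mathbb{R}^2$. For any $p\in[1,\infty)$ and $\varepsilon>0$ there exist a function $W(x,y)\ge0$ with $\|W\|_{L^\infty_yL^p_x}\le\varepsilon$ and a constant $C_0$ such that $|K(x,y)|\le C_0+W(x,y)$ for all $(x,y)\in\mathbb{R}^{2+2}$.
   Context: $\langle x\rangle=(1+|x|^2)^{1/2}$; $\|W\|_{L^\infty_yL^p_x}=\sup_y\|W(\cdot,y)\|_{L^p(\mathbb{R}^2)}$. *)

(* Defs.v *)
From HB Require Import structures.
From mathcomp Require Import all_boot all_order all_algebra.
From mathcomp Require Import all_classical all_reals all_analysis.
Set Implicit Arguments. Unset Strict Implicit. Unset Printing Implicit Defensive.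
Import Order.TTheory GRing.Theory Num.Theory.
Local Open Scope ring_scope.

Definition euclid_norm2 {R : realType} (x : R * R) : R :=
  Num.sqrt (x.1 ^+ 2 + x.2 ^+ 2).

Definition jbracket {R : realType} (x : R * R) : R :=
  Num.sqrt (1 + x.1 ^+ 2 + x.2 ^+ 2).

Definition Kker {R : realType} (x y : R * R) : R :=
  ln (euclid_norm2 (x.1 - y.1, x.2 - y.2) / jbracket x) / (1 + ln (jbracket y)).

Definition leb2 {R : realType} :=
  ((@lebesgue_measure R) \x (@lebesgue_measure R))%E.

(* Main.v *)
Require Import Defs.
From HB Require Import structures.
From mathcomp Require Import all_boot all_order all_algebra.
From mathcomp Require Import all_classical all_reals all_analysis.
From mathcomp Require Import ring lra measurable_realfun.
Import Order.TTheory GRing.Theory Num.Theory.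
Local Open Scope classical_set_scope.
Local Open Scope ring_scope.
Set Implicit Arguments. Unset Strict Implicit. Unset Printing Implicit Defensive.

Section Aux.
Variable R : realType.
Implicit Types (p u : R) (m n : nat).

Definition cc p m : R := p * 2 `^ (m%:R / p).
Definition hh p n u : R :=
  if u <= - (n.+1%:R * ln 2) then cc p (Num.truncn (- u / ln 2)) else 0.
Definition ss (x y : R * R) : R := Num.max `|x.1 - y.1| `|x.2 - y.2|.
Definition WW p n (x y : R * R) : R := hh p n (ln (ss x y)).

Lemma ln2_gt0 : 0 < ln (2:R).
Proof. by apply: ln_gt0; rewrite ltr1n. Qed.

Lemma ln2_le1 : ln (2:R) <= 1.
Proof.
have h : (2:R) <= expR 1 by have := expR_ge1Dx (1:R).
rewrite -[leRHS](expRK (1:R)) ler_ln// posrE//; exact: lt_le_trans h.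
Qed.

Lemma cc_ge0 p m : 1 <= p -> 0 <= cc p m.
Proof. by move=> p1; rewrite /cc mulr_ge0 ?powR_ge0// (le_trans _ p1). Qed.

Lemma cc_mono p m m' : 1 <= p -> (m <= m')%N -> cc p m <= cc p m'.
Proof.
move=> p1 mm; rewrite /cc ler_pM2l ?(lt_le_trans _ p1)//.
apply: ler_powR; first by rewrite ler1n.
by rewrite ler_pM2r ?invr_gt0 ?(lt_le_trans _ p1)// ler_nat.
Qed.

Lemma cc_lb p m : 1 <= p -> (m.+1%:R * ln 2) <= cc p m.
Proof.
move=> p1; have p0 : 0 < p by exact: lt_le_trans p1.
rewrite /cc /powR (negbTE (_ : (2:R) != 0))//.
apply: le_trans (_ : p * (1 + m%:R / p * ln 2) <= _); last first.
  by rewrite ler_pM2l// expR_ge1Dx.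
rewrite mulrDr mulr1 mulrA (mulrC p) mulfVK ?gt_eqF// mulrSr mulrDl mul1r.
by rewrite addrC lerD2r (le_trans ln2_le1).
Qed.

Lemma cc_pow p m : 1 <= p -> cc p m `^ p = p `^ p * 2 ^+ m.
Proof.
move=> p1; have p0 : 0 < p by exact: lt_le_trans p1.
rewrite /cc powRM ?ltW ?powR_ge0//; congr (_ * _).
by rewrite -powRrM mulfVK ?gt_eqF// powR_mulrn.
Qed.

Lemma hh_ge0 p n u : 1 <= p -> 0 <= hh p n u.
Proof. by move=> p1; rewrite /hh; case: ifP => // _; exact: cc_ge0. Qed.

Lemma hh_noninc p n : 1 <= p -> {homo hh p n : u v /~ u <= v}.
Proof.
move=> p1 u v vu; rewrite /hh.
case: ifPn => hu; last by case: ifP => _ //; exact: cc_ge0.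
rewrite (le_trans vu hu); apply: cc_mono => //; apply: le_truncn.
by rewrite ler_pM2r ?invr_gt0 ?ln2_gt0// lerN2.
Qed.

End Aux.
Section Aux2.
Variable R : realType.

Lemma sq_le (u v : R) : 0 <= v -> u ^+ 2 <= v ^+ 2 -> u <= v.
Proof. move=> v0 h; case: (leP u v) => // vu; nra. Qed.
 
Lemma geom_facts (x1 x2 y1 y2 : R) :
  let a := Num.sqrt ((x1 - y1) ^+ 2 + (x2 - y2) ^+ 2) in
  let X := Num.sqrt (1 + x1 ^+ 2 + x2 ^+ 2) in
  let Y := Num.sqrt (1 + y1 ^+ 2 + y2 ^+ 2) in
  [/\ a <= 2 * X * Y, X <= 2 * (Y + Num.max 1 a), 1 <= X, 1 <= Y &
      Num.max `|x1 - y1| `|x2 - y2| <= a].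
Proof.
move=> a X Y.
have a0 : 0 <= a by exact: sqrtr_ge0.
have X0 : 0 <= X by exact: sqrtr_ge0.
have Y0 : 0 <= Y by exact: sqrtr_ge0.
have a2 : a ^+ 2 = (x1 - y1) ^+ 2 + (x2 - y2) ^+ 2 by rewrite sqr_sqrtr// addr_ge0 ?sqr_ge0.
have X2 : X ^+ 2 = 1 + x1 ^+ 2 + x2 ^+ 2 by rewrite sqr_sqrtr// !addr_ge0 ?sqr_ge0.
have Y2 : Y ^+ 2 = 1 + y1 ^+ 2 + y2 ^+ 2 by rewrite sqr_sqrtr// !addr_ge0 ?sqr_ge0.
have X1 : 1 <= X by apply: sq_le => //; rewrite expr1n X2; nra.
have Y1 : 1 <= Y by apply: sq_le => //; rewrite expr1n Y2; nra.
split => //.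
- apply: sq_le; first by nra.
  have -> : (2 * X * Y) ^+ 2 = 4 * X ^+ 2 * Y ^+ 2 by ring.
  rewrite a2 X2 Y2.
  have h1 : (x1 - y1) ^+ 2 <= 2 * x1 ^+ 2 + 2 * y1 ^+ 2 by have := sqr_ge0 (x1 + y1); nra.
  have h2 : (x2 - y2) ^+ 2 <= 2 * x2 ^+ 2 + 2 * y2 ^+ 2 by have := sqr_ge0 (x2 + y2); nra.
  have h3 : 0 <= (x1 ^+ 2 + x2 ^+ 2) * (y1 ^+ 2 + y2 ^+ 2) by apply: mulr_ge0; nra.
  nra.
- set A := Num.max 1 a.
  have A1 : 1 <= A by rewrite le_max lexx.
  have aA : a <= A by rewrite le_max lexx orbT.
  apply: sq_le; first by nra.
  rewrite X2; have : (x1 - y1) ^+ 2 + (x2 - y2) ^+ 2 <= A ^+ 2 by rewrite -a2; nra.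
  move=> hA.
  have e1 : x1 ^+ 2 <= 2 * y1 ^+ 2 + 2 * (x1 - y1) ^+ 2 by have := sqr_ge0 (x1 - 2 * y1); nra.
  have e2 : x2 ^+ 2 <= 2 * y2 ^+ 2 + 2 * (x2 - y2) ^+ 2 by have := sqr_ge0 (x2 - 2 * y2); nra.
  have e3 : 0 <= Y * A by nra.
  have -> : (2 * (Y + A)) ^+ 2 = 4 * Y ^+ 2 + 8 * (Y * A) + 4 * A ^+ 2 by ring.
  rewrite Y2; nra.
- rewrite ge_max; apply/andP; split; apply: sq_le => //; rewrite a2 real_normK ?num_real. all: try by []. by rewrite lerDl sqr_ge0. by rewrite lerDr sqr_ge0.
Qed.
End Aux2.
Section Aux3.
Variable R : realType.

Lemma ln_mono (u v : R) : 0 < u -> u <= v -> ln u <= ln v.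
Proof. move=> u0 uv; by rewrite ler_ln ?posrE ?(lt_le_trans u0 uv). Qed.

Lemma ss_gt0 (x y : R * R) : x <> y -> 0 < ss x y.
Proof.
case: x y => [x1 x2] [y1 y2] /= xy; rewrite /ss /= lt_max !normr_gt0 !subr_eq0.
case: (eqVneq x1 y1) => [e1|//]; case: (eqVneq x2 y2) => [e2|//].
by exfalso; apply: xy; rewrite e1 e2.
Qed.

Lemma lnss_bound (p : R) n x y : 1 <= p -> x <> y ->
  - ln (ss x y) <= n.+1%:R * ln 2 + WW p n x y.
Proof.
move=> p1 xy; have s0 := ss_gt0 xy.
have l2 := @ln2_gt0 R.
rewrite /WW /hh; case: ifPn => h; last first.
  by rewrite addr0 lerNl ltW// ltNge.
set t := - ln (ss x y) / ln 2.
have t0 : 0 <= t.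
  by rewrite /t divr_ge0 ?(ltW l2)// oppr_ge0 (le_trans h)// oppr_le0 mulr_ge0 ?(ltW l2).
have := truncn_itv t0 => /andP[_ ht].
apply: le_trans (_ : cc p (Num.truncn t) <= _); last by rewrite lerDr mulr_ge0 ?ltW.
apply: le_trans (cc_lb _ p1); rewrite -ler_pdivrMr// ltW//.
Qed.

Lemma K_bound (p : R) n x y : 1 <= p -> x <> y ->
  `|Kker x y| <= (ln 4 + 1 + n.+1%:R * ln 2) + WW p n x y.
Proof.
move=> p1 xy.
have hs := lnss_bound n p1 xy; have s0 := ss_gt0 xy.
have W0 : 0 <= WW p n x y by exact: hh_ge0.
have l2 := @ln2_gt0 R.
move: hs s0 W0; case: x y xy => [x1 x2] [y1 y2] xy.
rewrite /Kker /euclid_norm2 /jbracket /WW /ss /=.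
have [haXY hXA hX1 hY1 hsa] := geom_facts x1 x2 y1 y2.
move: haXY hXA hX1 hY1 hsa.
set a := Num.sqrt _; set X := Num.sqrt (1 + x1 ^+ 2 + x2 ^+ 2);
set Y := Num.sqrt (1 + y1 ^+ 2 + y2 ^+ 2); set s := Num.max _ _.
set w := hh p n _.
move=> haXY hXA hX1 hY1 hsa hs s0 W0.
have a0 : 0 < a by exact: lt_le_trans hsa.
have X0 : 0 < X by exact: lt_le_trans hX1.
have Y0 : 0 < Y by exact: lt_le_trans hY1.
set A := Num.max 1 a.
have A1 : 1 <= A by rewrite le_max lexx.
have aA : a <= A by rewrite le_max lexx orbT.
have A0 : 0 < A by exact: lt_le_trans A1.
have lY0 : 0 <= ln Y by exact: ln_ge0.
have l4 : ln (4:R) = ln 2 + ln 2.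
  by rewrite -lnM ?posrE// -natrM.
set M := ln A - ln a.
have M0 : 0 <= M by rewrite subr_ge0 ln_mono.
have hM : M <= n.+1%:R * ln 2 + w.
  rewrite /M; case: (leP 1 a) => a1.
    have -> : A = a by apply: max_r.
    by rewrite subrr addr_ge0// mulr_ge0 ?ltW.
  have -> : A = 1 by apply: max_l; apply: ltW.
  by rewrite ln1 add0r (le_trans _ hs)// lerN2 ln_mono.
have up : ln a <= ln 2 + ln X + ln Y.
  rewrite -!lnM ?posrE ?mulr_gt0// ln_mono// mulrA.
have lo : ln X <= ln 4 + ln Y + ln A.
  rewrite -!lnM ?posrE ?mulr_gt0// ln_mono// (le_trans hXA)//.
  have : Y + A <= 2 * Y * A by nra.
  move=> h; have -> : (4:R) * Y * A = 2 * (2 * Y * A) by ring.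
  by rewrite ler_pM2l.
rewrite ln_div ?posrE// normrM normfV.
have D1 : 1 <= 1 + ln Y by rewrite lerDl.
rewrite (ger0_norm (le_trans ler01 D1)) ler_pdivrMr ?(lt_le_trans ltr01 D1)//.
have hN : `|ln a - ln X| <= ln 4 + ln Y + M.
  have eM : M = ln A - ln a by [].
  clearbody M; rewrite ler_norml; apply/andP; split; lra.
apply: (le_trans hN).
have : 0 <= ln 4 + 1 + M by lra.
move=> h0; nra.
Qed.
End Aux3.
Section Aux4.
Variable R : realType.
Lemma WW_meas (p : R) n y : 1 <= p -> measurable_fun [set: R * R] (fun x => WW p n x y).
Proof.
move=> p1; rewrite /WW.
apply: measurableT_comp; first by apply: nonincreasing_measurable => // u v; apply: hh_noninc.
apply: measurableT_comp; first exact: measurable_ln.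
rewrite /ss; apply: measurable_maxr.
- apply: measurableT_comp; first exact: normr_measurable.
  apply: measurable_funB; [exact: measurable_fst | exact: measurable_cst].
- apply: measurableT_comp; first exact: normr_measurable.
  apply: measurable_funB; [exact: measurable_snd | exact: measurable_cst].
Qed.
End Aux4.
Section Aux5.
Variable R : realType.
Local Open Scope ring_scope.

Definition rad (k : nat) : R := (2 ^+ k)^-1.
Definition box (y : R * R) (k : nat) : set (R * R) :=
  `[y.1 - rad k, y.1 + rad k] `*` `[y.2 - rad k, y.2 + rad k].

Lemma rad_gt0 k : 0 < rad k.
Proof. by rewrite /rad invr_gt0 exprn_gt0. Qed.

Lemma ln_rad k : ln (rad k) = - (k%:R * ln 2).
Proof.
by rewrite /rad lnV ?posrE ?exprn_gt0// lnXn// mulr_natl.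
Qed.

Lemma in_box (p : R) n x y : 1 <= p -> ln (ss x y) <= - (n.+1%:R * ln 2) ->
  (n.+1 <= Num.truncn (- ln (ss x y) / ln 2))%N /\
  box y (Num.truncn (- ln (ss x y) / ln 2)) x.
Proof.
move=> p1 h; have l2 := @ln2_gt0 R.
set t := - ln (ss x y) / ln 2.
have t0 : 0 <= t.
  by rewrite /t divr_ge0 ?(ltW l2)// oppr_ge0 (le_trans h)// oppr_le0 mulr_ge0 ?(ltW l2).
have s0 : 0 < ss x y.
  rewrite lt_neqAle; apply/andP; split.
    apply/negP => /eqP e; move: h; rewrite -e ln0// oppr_ge0 => h.
    by move: (mulr_gt0 (ltr0Sn R n) l2); rewrite ltNge h.
  by rewrite /ss le_max normr_ge0.
split.
  by rewrite truncn_ge_nat// /t ler_pdivlMr// lerNr.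
have hm := truncn_itv t0; move: hm => /andP[hm _].
have ss_le : ss x y <= rad (Num.truncn t).
  rewrite -ler_ln ?posrE ?rad_gt0// ln_rad lerNr.
  by rewrite -ler_pdivlMr.
move: ss_le; rewrite /ss ge_max => /andP[h1 h2].
by split; rewrite /= in_itv /= -ler_distl.
Qed.
End Aux5.
Section Aux6.
Variable R : realType.
Local Open Scope ring_scope.

Definition term (p : R) n y j (x : R * R) : \bar R :=
  ((p `^ p * 2 ^+ (j + n.+1)) * \1_(box y (j + n.+1)) x)%:E.

Lemma term_ge0 (p : R) n y j x : (0 <= term p n y j x)%E.
Proof. by rewrite /term lee_fin mulr_ge0 ?mulr_ge0 ?powR_ge0 ?exprn_ge0. Qed.

Lemma W_pow_bound (p : R) n x y : 1 <= p ->
  ((WW p n x y `^ p)%:E <= \sum_(j <oo) term p n y j x)%E.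
Proof.
move=> p1; have p0 : 0 < p by exact: lt_le_trans p1.
rewrite /WW /hh; case: ifPn => h; last first.
  by rewrite powR0 ?gt_eqF// nneseries_ge0// => k _ _; exact: term_ge0.
have [hn hb] := in_box p1 h.
move: hn hb; set m := Num.truncn _ => hn hb.
rewrite cc_pow//.
have -> : m = (m - n.+1 + n.+1)%N by rewrite subnK.
set j := (m - n.+1)%N.
apply: le_trans (nneseries_lim_ge j.+1 _); last by move=> k _ _; exact: term_ge0.
rewrite big_nat_recr//= lee_paddl//; first by rewrite sume_ge0// => k _; exact: term_ge0.
rewrite /term indicE mem_set -?subnK// ?mulr1 ?subnK//.
Qed.
End Aux6.
Section Aux7.
Variable R : realType.
Local Open Scope ring_scope.

Lemma box_meas (y : R * R) k : measurable (box y k).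
Proof. by apply: measurableX; exact: measurable_itv. Qed.

Lemma int_term (p : R) n y j :
  (\int[leb2]_x term p n y j x = ((4 * p `^ p) / (2 ^ (j + n.+1))%:R)%:E)%E.
Proof.
have hk : p `^ p * 2 ^+ (j + n.+1) < 0 -> box y (j + n.+1) = set0.
  by rewrite ltNge mulr_ge0 ?powR_ge0 ?exprn_ge0.
have H := integralZl_indic (m := leb2) (D := setT) measurableT
  (fun _ => box y (j + n.+1)) _ hk (box_meas _ _).
rewrite /= in H; rewrite /term H.
  rewrite integral_indic ?box_meas//.
  rewrite (_ : _ `&` _ = box y (j + n.+1)); last first.
    by apply/seteqP; split => [z []|z].
  have E := @product_measure1E _ _ _ _ R (@lebesgue_measure R) (@lebesgue_measure R)
    `[y.1 - rad R (j + n.+1), y.1 + rad R (j + n.+1)] `[y.2 - rad R (j + n.+1), y.2 + rad R (j + n.+1)]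
    (measurable_itv _) (measurable_itv _).
  match goal with |- ((?a * ?b)%E = _) => have -> : b = (@lebesgue_measure R
     `[(y.1 - rad R (j + n.+1))%R, (y.1 + rad R (j + n.+1))%R] * @lebesgue_measure R
     `[(y.2 - rad R (j + n.+1))%R, (y.2 + rad R (j + n.+1))%R])%E by exact: E end.
  rewrite !lebesgue_measure_itv /=.
  have r0 := rad_gt0 R (j + n.+1).
  rewrite !ifT ?ltrD2l ?gtrN ?ltrBlDr -?addrA ?ltrDl ?addr_gt0 //.
  rewrite -!EFinD -!EFinM; congr (_%:E).
  rewrite /rad natrX.
  set q := (2:R) ^+ (j + n.+1).
  have q0 : q != 0 by rewrite expf_neq0.
  by field.
  all: try (rewrite lte_fin; lra).
  exact: box_meas.
Qed.
End Aux7.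
Section Aux8.
Variable R : realType.
Local Open Scope ring_scope.

Lemma term_meas (p : R) n y j : measurable_fun [set: R * R] (term p n y j).
Proof.
apply/measurable_EFinP; apply: measurable_funM; first exact: measurable_cst.
by apply: measurable_indic; exact: box_meas.
Qed.

Lemma series_meas (p : R) n y :
  measurable_fun [set: R * R] (fun x => \sum_(j <oo) term p n y j x)%E.
Proof.
have := @ge0_emeasurable_sum _ _ R setT (fun j => term p n y j) xpredT.
move=> /(_ _ _); apply.
- by move=> k x _ _; exact: term_ge0.
- by move=> k _; exact: term_meas.
Qed.
End Aux8.
Section Aux9.
Variable R : realType.
Local Open Scope ring_scope.

Lemma W_int (p : R) n y : 1 <= p ->
  (\int[leb2]_x (`|(WW p n x y)%:E| `^ p) <= ((4 * p `^ p) / 2 ^+ n)%:E)%E.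
Proof.
move=> p1.
have mW := WW_meas n y p1.
have mW2 : measurable_fun [set: R * R] (fun x => ((WW p n x y) `^ p)%:E).
  have h : measurable_fun [set: R * R] (fun x => WW p n x y `^ p).
    exact: (measurableT_comp (measurable_powR p) mW).
  by move/measurable_EFinP: h.
have e : forall x, (`|(WW p n x y)%:E| `^ p)%E = ((WW p n x y) `^ p)%:E.
  by move=> x; rewrite abse_EFin poweR_EFin ger0_norm // hh_ge0.
under eq_integral => x _ do rewrite e.
apply: le_trans.
  apply: (@ge0_le_integral _ _ _ leb2 setT measurableT _ (fun x => \sum_(j <oo) term p n y j x)%E).
  - by move=> x _; rewrite lee_fin powR_ge0.
  - exact: mW2.
  - exact: series_meas.
  - by move=> x _; exact: W_pow_bound.
rewrite integral_nneseries //; last first.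
  by move=> k x _; exact: term_ge0.
  by move=> k; exact: term_meas.
rewrite (eq_eseriesr (g := fun j => ((4 * p `^ p) / (2 ^ (j + n.+1))%:R)%:E)); last first.
  by move=> j _; exact: int_term.
have := @cvg_geometric_eseries_half R (4 * p `^ p) n.
move=> /cvg_lim <- //.
Qed.
End Aux9.
Unset Implicit Arguments.

Theorem lemma2p3 (R : realType) (p eps : R) :
  1 <= p -> 0 < eps ->
  exists (W : R * R -> R * R -> R) (C0 : R),
    (forall x y, 0 <= W x y) /\
    (forall y, measurable_fun [set: R * R] (fun x => W x y)) /\
    (forall y, (Lnorm leb2 p%:E (fun x => (W x y)%:E) <= eps%:E)%E) /\
    (forall x y, x <> y -> `|Kker x y| <= C0 + W x y).
Proof.
move=> p1 e0.
have p0 : 0 < p by exact: lt_le_trans p1.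
set Q := 4 * p `^ p / eps `^ p.
pose n := Num.truncn Q.
exists (WW p n), (ln 4 + 1 + n.+1%:R * ln 2).
split; [|split; [|split]].
- by move=> x y; exact: hh_ge0.
- by move=> y; exact: WW_meas.
- move=> y; rewrite unlock.
  have ep0 : 0 < eps `^ p by rewrite /powR gt_eqF// expR_gt0.
  have hQ : 4 * p `^ p / 2 ^+ n <= eps `^ p.
    have h1 : Q < n.+1%:R by exact: truncnS_gt.
    have h2 : (n.+1 <= 2 ^ n)%N by exact: ltn_expl.
    have h3 : Q <= 2 ^+ n.
      apply: le_trans (ltW h1) _; rewrite -natrX ler_nat //.
    have E : Q * eps `^ p = 4 * p `^ p by rewrite /Q mulfVK ?gt_eqF.
    by rewrite ler_pdivrMr ?exprn_gt0// -E mulrC ler_pM2l.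
  have H1 : ((\int[leb2]_x `|(WW p n x y)%:E| `^ p) `^ p^-1 <=
             ((4 * p `^ p / 2 ^+ n)%:E) `^ p^-1)%E.
    apply: gt0_ler_poweR; first by rewrite invr_ge0 ltW.
    + by rewrite in_itv /= leey andbT integral_ge0// => x _; exact: poweR_ge0.
    + by rewrite in_itv /= leey andbT lee_fin divr_ge0 ?mulr_ge0 ?powR_ge0 ?exprn_ge0.
    exact: W_int.
  refine (le_trans H1 _).
  rewrite poweR_EFin lee_fin.
  apply: le_trans (_ : (eps `^ p) `^ p^-1 <= _).
    apply: ge0_ler_powR => //.
    - by rewrite invr_ge0 ltW.
    - by rewrite nnegrE divr_ge0 ?mulr_ge0 ?powR_ge0 ?exprn_ge0.
    - by rewrite nnegrE powR_ge0.
  by rewrite -powRrM mulfV ?gt_eqF// powRr1 ?(ltW e0).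
- by move=> x y xy; exact: K_bound.
Qed.
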